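(* Let $u$ and $v$ be vertices of $G$ and let $P(u,v)=(u=x_1,\dots,x_p=v)$ be the path from $u$ to $v$ in $T$. Suppose the routing steps of a single case of the routing algorithm are executed (when routing from $u$ to $v$) and vertices $w_1$ and $w_2$ are visited. Then there are indices $1\le i_1\le i_2\le p$ such that $w_1=x_{i_1}$ and $w_2=x_{i_2}$.
   Context: Let $T$ be a rooted tree on $n$ vertices with positive edge weights; $P(a,b)$ is the path in $T$ from $a$ to $b$ and $\delta_T(a,b)$ its weight. Ancestor/descendant refer to $T$, and a vertex counts as its own ancestor and descendant; ''deepest''/''highest'' refer to depth in $T$. $T_v$ is the subtree of $T$ rooted at $v$. For every non-leaf vertex $v$ fix a child $c_1(v)$ with $|T_{c_1(v)}|$ maximal; edges $(v,c_1(v))$ are leftmost. A subtree $R$ of $T$ is rooted at its vertex closest to the root, $rt(R)$, and inherits the leftmost labelling; $R_v$ is the subtree of $R$ rooted at $v$. $P_R(v)$ is the longest downward path from $v$ in $R$ using only leftmost edges, with last vertex $l(v)$; $l(R):=l(rt(R))$. A vertex $v$ of $R$ is $d$-balanced if $|R_{c_1(v)}|\le |R|-d$ (with $|R_{c_1(v)}|=0$ if $c_1(v)$ is undefined or not in $R$); $b_d(v)$ is the first $d$-balanced vertex on $P_R(v)$, or NULL. $CV(R,d)=\emptyset$ if $b_d(rt(R))$ is NULL, else $\{b\}\cup\bigcup_w CV(R_w,d)$ with $b=b_d(rt(R))$ and $w$ ranging over children of $b$ in $R$. Fix an integer $k\ge4$; for a subtree $R$ with $m$ vertices, $C_R=V(R)$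 if $k\ge m/2-1$, else $C_R=CV(R,m/k)\cup\{l(R),rt(R)\}$. Canonical subtrees: $T$ is canonical; if $R$ is canonical, each component of $R$ minus $C_R$ is canonical. Each vertex $v$ lies in $C_R$ for exactly one canonical $R$, denoted $T^v$. The spanner $G$ has vertex set $V(T)$ and edges: all edges of $T$, and all pairs of distinct vertices of $C_R$ for every canonical $R$; edge $(a,b)$ has weight $\delta_T(a,b)$. Routing algorithm from current vertex $u$ to destination $v$: Case 0: if $v$ is adjacent to $u$, move to $v$. Case 1: $u$ is an ancestor of $v$; let $X$ be the vertices of $C_{T^u}$ that are ancestors of $v$, $x$ the deepest; move to $x$, then to the child of $x$ that is an ancestor of $v$. Case 2: $u$ is a descendant of $v$; let $X$ be the vertices of $C_{T^u}$ that are descendants of $v$ and ancestors of $u$, $x$ the highest; move to $x$, then to the parent of $x$. Case 3: $u$ is neither; let $X$ be the vertices of $C_{T^u}$ that are ancestors of $v$ but not of $u$, and $Y$ those that are ancestors of $u$ but not of $v$, $y$ the highest vertex of $Y$. Case 3 a): $X=\emptyset$: move to $y$, then to the parent of $y$. Case 3 b): $X\neq\emptyset$: with $x$ the deepest vertex of $X$ and $x'$ the child of $x$ that is an ancestor of $v$, move to $x$, then to $x'$. (Moving to the current vertex means staying.) *)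

(* Defs.v *)
From mathcomp Require Import all_boot all_order all_algebra.
Set Implicit Arguments. Unset Strict Implicit. Unset Printing Implicit Defensive.
Import Order.TTheory GRing.Theory Num.Theory.

(* A rooted tree on the finite vertex type V is given by a parent map [par]
   and a root [r] (with par r = r).  [c1 v] is the fixed heavy child of v
   (None iff v is a leaf).  Edge weights play no role in the routing
   decisions nor in the statement, so they are omitted. *)
Section Routing.
Variable V : finType.
Variable par : V -> V.
Variable r : V.
Variable c1 : V -> option V.

Definition anc (a x : V) : bool := fconnect par x a.
Definition child (x y : V) : bool := (y != r) && (par y == x).
Definition Tsub (v : V) : {set V} := [set x | anc v x].
Definition depth (x : V) : nat := #|[set a | anc a x]|.
Definition adjT (a b : V) : bool := child b a || child a b.

Definition is_rooted_tree : Prop := par r = r /\ forall v, anc r v.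

Definition leftmost_choice : Prop :=
  forall v, match c1 v with
            | Some c => child v c /\ forall c', child v c' -> #|Tsub c'| <= #|Tsub c|
            | None => forall c', ~~ child v c'
            end.

(* z lies on the tree path P(x,y) *)
Definition onpath (z x y : V) : bool :=
  (anc z x || anc z y) && [forall a, (anc a x && anc a y) ==> anc a z].

Definition tconnected (S : {set V}) : Prop :=
  S != set0 /\ forall x y z, x \in S -> y \in S -> onpath z x y -> z \in S.

Definition tpath (u v : V) (s : seq V) : bool :=
  if s is x :: s' then [&& x == u, path adjT x s', last x s' == v & uniq s]
  else false.

Definition subR (R : {set V}) (v : V) : {set V} := R :&: Tsub v.
Definition is_rt (R : {set V}) (x : V) : Prop := x \in R /\ (x = r \/ par x \notin R).
(* one step along a leftmost edge inside R (stays put at the end of P_R) *)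
Definition lstep (R : {set V}) (x : V) : V :=
  if c1 x is Some c then (if c \in R then c else x) else x.
Definition is_l (R : {set V}) (x : V) : Prop :=
  exists t i, [/\ is_rt R t, iter i (lstep R) t = x & lstep R x = x].
Definition csize (R : {set V}) (v : V) : nat :=
  if c1 v is Some c then (if c \in R then #|subR R c| else 0) else 0.
Definition balanced (R : {set V}) (d : rat) (v : V) : bool :=
  ((csize R v)%:R <= (#|R|%:R - d))%R.
(* b = b_d(v) : first d-balanced vertex on P_R(v) (no such b means NULL) *)
Definition is_bd (R : {set V}) (d : rat) (v b : V) : Prop :=
  exists i, [/\ iter i (lstep R) v = b, balanced R d b &
                forall j, j < i -> ~~ balanced R d (iter j (lstep R) v)].

Inductive inCV (d : rat) : {set V} -> V -> Prop :=
| CV_here R t b : is_rt R t -> is_bd R d t b -> inCV d R b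
| CV_rec R t b w x : is_rt R t -> is_bd R d t b -> w \in R -> child b w ->
    inCV d (subR R w) x -> inCV d R x.

(* x \in C_R ;  k >= m/2 - 1  <->  m <= 2k + 2 *)
Definition inC (k : nat) (R : {set V}) (x : V) : Prop :=
  if #|R| <= k.*2 + 2 then is_true (x \in R)
  else [\/ inCV ((#|R|%:R / k%:R)%R) R x, is_l R x | is_rt R x].

Definition component (A : V -> Prop) (S : {set V}) : Prop :=
  [/\ tconnected S, forall x, x \in S -> A x &
      forall S' : {set V}, S \subset S' -> (forall x, x \in S' -> A x) -> tconnected S' -> S' = S].

Inductive canonical (k : nat) : {set V} -> Prop :=
| can_T : canonical k [set: V]
| can_comp R S : canonical k R ->
    component (fun x => x \in R /\ ~ inC k R x) S -> canonical k S.

Definition adjG (k : nat) (u v : V) : Prop :=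
  adjT u v \/ (u <> v /\ exists R, [/\ canonical k R, inC k R u & inC k R v]).

Definition deepest (X : V -> Prop) (x : V) : Prop :=
  X x /\ forall y, X y -> depth y <= depth x.
Definition highest (X : V -> Prop) (x : V) : Prop :=
  X x /\ forall y, X y -> depth x <= depth y.

(* [route k u v ws]: executing the steps of one case of the routing
   algorithm at u (destination v) visits, in order, the vertices ws
   (starting with the current vertex u).  R plays the role of T^u. *)
Definition route (k : nat) (u v : V) (ws : seq V) : Prop :=
     (adjG k u v /\ ws = [:: u; v]) \/
      (~ adjG k u v /\ anc u v /\
      exists R x x', [/\ canonical k R, inC k R u,
        deepest (fun y => inC k R y /\ anc y v) x,
        child x x' /\ anc x' v & ws = [:: u; x; x']]) \/
      (~ adjG k u v /\ anc v u /\
      exists R x, [/\ canonical k R, inC k R u,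
        highest (fun y => [/\ inC k R y, anc v y & anc y u]) x &
        ws = [:: u; x; par x]]) \/
      (~ adjG k u v /\ ~~ anc u v /\ ~~ anc v u /\
      exists R y, [/\ canonical k R, inC k R u,
        (forall x, ~ [/\ inC k R x, anc x v & ~~ anc x u]),
        highest (fun y => [/\ inC k R y, anc y u & ~~ anc y v]) y &
        ws = [:: u; y; par y]]) \/
      (~ adjG k u v /\ ~~ anc u v /\ ~~ anc v u /\
      exists R x x', [/\ canonical k R, inC k R u,
        deepest (fun y => [/\ inC k R y, anc y v & ~~ anc y u]) x,
        child x x' /\ anc x' v & ws = [:: u; x; x']]).

End Routing.

(* Main.v *)
Require Import Defs.
From mathcomp Require Import all_boot all_order all_algebra.
From mathcomp Require Import zify.
Set Implicit Arguments. Unset Strict Implicit. Unset Printing Implicit Defensive.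

Lemma ancP (V : finType) (par : V -> V) a x :
  reflect (exists n, iter n par x = a) (anc par a x).
Proof.
apply: (iffP idP) => [h|[n <-]]; last exact: fconnect_iter.
by exists (findex par x a); apply: iter_findex.
Qed.

Lemma anc_refl (V : finType) (par : V -> V) x : anc par x x.
Proof. exact: connect0. Qed.

Lemma anc_trans (V : finType) (par : V -> V) a b c :
  anc par a b -> anc par b c -> anc par a c.
Proof. rewrite /anc => h1 h2; exact: connect_trans h2 h1. Qed.

Lemma anc_par (V : finType) (par : V -> V) x : anc par (par x) x.
Proof. exact: fconnect1. Qed.

Lemma anc_step (V : finType) (par : V -> V) a y :
  anc par a y -> a = y \/ anc par a (par y).
Proof.
case/ancP => [[|n]] <-; [by left | right].
by rewrite iterSr; apply/ancP; exists n.
Qed.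

Lemma anc_total (V : finType) (par : V -> V) a b u :
  anc par a u -> anc par b u -> anc par a b \/ anc par b a.
Proof.
case/ancP => n <-; case/ancP => m <-.
case: (leqP n m) => h.
  right; apply/ancP; exists (m - n); by rewrite -iterD subnK.
left; apply/ancP; exists (n - m); rewrite -iterD subnK //; exact: ltnW.
Qed.

Lemma iter_r (V : finType) (par : V -> V) r n : par r = r -> iter n par r = r.
Proof. by move=> h; elim: n => //= n ->. Qed.

Lemma anc_antisym (V : finType) (par : V -> V) r a b :
  is_rooted_tree par r -> anc par a b -> anc par b a -> a = b.
Proof.
move=> [hr hall] /ancP [n hn] /ancP [m hm].
have hc : iter (m + n) par b = b by rewrite iterD hn hm.
case: (posnP (m + n)) => hN.
  by move: hN hn => /eqP; rewrite addn_eq0 => /andP [_ /eqP ->] /= <-.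
case/ancP: (hall b) => p hp.
have hj : forall j, iter (j * (m + n)) par b = b.
  elim=> // j IH; by rewrite mulSn iterD IH hc.
have hb : b = r.
  rewrite -(hj p) -(subnK (leq_pmulr p hN)) iterD hp iter_r //.
by rewrite -hn hb iter_r.
Qed.

Lemma par_fix (V : finType) (par : V -> V) r x :
  is_rooted_tree par r -> par x = x -> x = r.
Proof.
move=> [hr hall] hx; case/ancP: (hall x) => n <-.
by elim: n => //= n <-.
Qed.

Lemma depth_lt (V : finType) (par : V -> V) r a x :
  is_rooted_tree par r -> anc par a x -> a != x -> depth par a < depth par x.
Proof.
move=> ht hax hne; apply: proper_card; apply/properP; split.
  apply/subsetP => c; rewrite !inE => h; exact: anc_trans h hax.
exists x; rewrite !inE ?anc_refl //.
apply/negP => h; move/eqP: hne; apply; exact: anc_antisym ht hax h.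
Qed.

Lemma onpath_l (V : finType) (par : V -> V) x y : onpath par x x y.
Proof.
apply/andP; split; first by rewrite anc_refl.
by apply/forallP => c; apply/implyP => /andP [].
Qed.

Lemma onpath_r (V : finType) (par : V -> V) x y : onpath par y x y.
Proof.
apply/andP; split; first by rewrite anc_refl orbT.
by apply/forallP => c; apply/implyP => /andP [].
Qed.

Lemma onpathI (V : finType) (par : V -> V) z x y :
  (anc par z x || anc par z y) ->
  (forall c, anc par c x -> anc par c y -> anc par c z) -> onpath par z x y.
Proof.
move=> h1 h2; apply/andP; split => //.
by apply/forallP => c; apply/implyP => /andP [] /h2 H /H.
Qed.

Lemma onpathE (V : finType) (par : V -> V) z x y : onpath par z x y ->
  (anc par z x || anc par z y) /\
  (forall c, anc par c x -> anc par c y -> anc par c z).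
Proof.
case/andP => h1 /forallP h2; split => // c a b.
by move: (h2 c); rewrite a b.
Qed.

Lemma onpath_step (V : finType) (par : V -> V) r a a' b w :
  is_rooted_tree par r -> adjT par r a a' -> onpath par w a b ->
  w = a \/ onpath par w a' b.
Proof.
move=> ht hadj /onpathE [h1 h2].
case/orP: hadj => /andP [hnr /eqP hp].
-
  subst a'.
  case/orP: h1 => h1.
    case: (anc_step h1) => [->|h]; first by left.
    right; apply: onpathI; first by rewrite h.
    move=> c hc hcb; apply: h2 => //; exact: anc_trans hc (anc_par _ _).
  right; apply: onpathI; first by rewrite h1 orbT.
  move=> c hc hcb; apply: h2 => //; exact: anc_trans hc (anc_par _ _).
-
  subst a.
  have hc : forall c, anc par c a' -> anc par c b -> c = a' \/ anc par c w.
    move=> c hc hcb; case: (anc_step hc) => [->|h]; [by left | right; exact: h2].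
  case hab: (anc par a' b); last first.
    right; apply: onpathI.
      case/orP: h1 => h1; last by rewrite h1 orbT.
      by rewrite (anc_trans h1 (anc_par _ _)).
    move=> c ca cb; case: (hc c ca cb) => // ec; subst c; by rewrite cb in hab.
  have haw : anc par (par a') w.
    apply: h2; [exact: anc_refl | exact: anc_trans (anc_par _ _) hab].
  case/orP: h1 => h1; first by left; exact: anc_antisym ht h1 haw.
  case: (anc_total h1 hab) => hw.
    case: (anc_step hw) => [->|h]; first by right; exact: onpath_l.
    by left; exact: anc_antisym ht h haw.
  right; apply: onpathI; first by rewrite h1 orbT.
  move=> c ca cb; case: (hc c ca cb) => // ->; exact: hw.
Qed.

Lemma walk (V : finType) (par : V -> V) r x s' w :
  is_rooted_tree par r -> path (adjT par r) x s' ->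
  onpath par w x (last x s') -> w \in x :: s'.
Proof.
move=> ht; elim: s' x => [|y s' IH] x /=.
  move=> _ /onpathE [h1 h2]; rewrite inE; apply/eqP.
  rewrite orbb in h1; apply: anc_antisym ht h1 _; apply: h2; exact: anc_refl.
case/andP => hxy hp ho; case: (onpath_step ht hxy ho) => [->|h].
  by rewrite inE eqxx.
by rewrite inE (IH y hp h) orbT.
Qed.

Lemma key (V : finType) (par : V -> V) r u v s w1 w2 :
  is_rooted_tree par r -> tpath par r u v s ->
  onpath par w1 u w2 -> onpath par w2 u v ->
  exists i1 i2, [/\ (i1 <= i2 < size s)%N, nth u s i1 = w1 & nth u s i2 = w2].
Proof.
move=> ht; case: s => // x s' /and4P [/eqP -> hp /eqP hl _] h12 h2.
have m2 : w2 \in u :: s' by apply: walk ht hp _; rewrite hl.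
set i2 := index w2 (u :: s').
have hi2 : i2 < size (u :: s') by rewrite index_mem.
have e2 : nth u (u :: s') i2 = w2 by rewrite nth_index.
have hpt : path (adjT par r) u (take i2 s').
  by move: hp; rewrite -{1}(cat_take_drop i2 s') cat_path => /andP [].
have hlt : last u (take i2 s') = w2.
  rewrite (last_nth u) size_take.
  have -> : (if i2 < size s' then i2 else size s') = i2.
    by case: ltnP => // h; apply/eqP; rewrite eqn_leq h -ltnS.
  by rewrite -e2 -[u :: take _ _]/(take i2.+1 (u :: s')) nth_take.
have m1 : w1 \in u :: take i2 s' by apply: walk ht hpt _; rewrite hlt.
exists (index w1 (u :: s')), i2; split => //; last by rewrite nth_index // -(cat_take_drop i2.+1 (u :: s')) mem_cat m1.
rewrite hi2 andbT.
rewrite -(cat_take_drop i2.+1 (u :: s')) index_cat /= m1 /=.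
have := index_mem w1 (u :: take i2 s'); rewrite m1 /= size_take.
move=> H; apply: leq_trans (_ : _ <= (if i2 < size s' then i2 else size s')) _; first by rewrite -ltnS.
case: ltnP => // h; exact: ltnW.
Qed.

Lemma three (V : finType) (par : V -> V) u v b c j1 j2 :
  onpath par b u v -> onpath par c u v -> onpath par b u c ->
  (j1 <= j2 < size [:: u; b; c])%N ->
  onpath par (nth u [:: u; b; c] j1) u (nth u [:: u; b; c] j2) /\
  onpath par (nth u [:: u; b; c] j2) u v.
Proof.
move=> hb hc hbc.
case: j1 j2 => [|[|[|j1]]] [|[|[|j2]]] //= _.
all: rewrite ?nth_nil; split; by [apply: onpath_l | apply: onpath_r | ].
Qed.

Theorem lemma12 (V : finType) (par : V -> V) (r : V) (c1 : V -> option V)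
  (k : nat) (u v : V) (ws s : seq V) :
  is_rooted_tree par r -> leftmost_choice par r c1 -> (4 <= k)%N ->
  u != v -> route par r c1 k u v ws -> tpath par r u v s ->
  forall j1 j2, (j1 <= j2 < size ws)%N ->
  exists i1 i2, [/\ (i1 <= i2 < size s)%N, nth u s i1 = nth u ws j1
                  & nth u s i2 = nth u ws j2].
Proof.
move=> ht _ _ huv hr hs j1 j2 hj.
suff H : (j1 <= j2 < size ws)%N -> onpath par (nth u ws j1) u (nth u ws j2) /\ onpath par (nth u ws j2) u v.
  by case: (H hj) => h1 h2; exact: key ht hs h1 h2.
clear hj.
case: hr => [[_ ->]|[[hadj [huv' [R [x [x' [cR iu [[hxin hxv] hdeep] [hc hx'v] ->]]]]]]|
  [[hadj [hvu [R [x [cR iu [[hxin hvx hxu] _] ->]]]]]|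
  [[hadj [_ [_ [R [y [cR iu _ [[hyin hyu hyv] _] ->]]]]]]|
  [hadj [_ [_ [R [x [x' [cR iu [[hxin hxv hxu] _] [hc hx'v] ->]]]]]]]]]]].
- case: j1 j2 => [|[|j1]] [|[|j2]] hj /=; try (exfalso; move: hj => /=; lia);
  rewrite ?nth_nil; split; by [apply: onpath_l | apply: onpath_r | ].
- have hux : anc par u x.
    case: (anc_total huv' hxv) => // hxu.
    case: (eqVneq x u) => [->|hne]; first exact: anc_refl.
    have h1 := hdeep u (conj iu huv'). have h2 := depth_lt ht hxu hne. lia.
  case/andP: hc => hx'r /eqP hpx.
  have hxx' : anc par x x' by rewrite -hpx; exact: anc_par.
  apply: three.
  + apply: onpathI; [by rewrite hxv orbT | move=> c cu _; exact: anc_trans cu hux].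
  + apply: onpathI; [by rewrite hx'v orbT | move=> c cu _; exact: anc_trans (anc_trans cu hux) hxx'].
  + apply: onpathI; first by rewrite hxx' orbT.
    move=> c cu cx'; case: (anc_step cx') => [ec|]; last by rewrite hpx.
    subst c; exfalso.
    have e : x = x' := anc_antisym ht hxx' (anc_trans cu hux).
    move: hpx; rewrite -e => /(par_fix ht) ex.
    by rewrite -e ex eqxx in hx'r.
- have hxv : x != v.
    apply/eqP => e; apply: hadj; right; split; first exact/eqP.
    exists R; split => //; by rewrite -e.
  have hvpx : anc par v (par x).
    case: (anc_step hvx) => // e; by rewrite e eqxx in hxv.
  apply: three.
  + apply: onpathI; [by rewrite hxu | move=> c _ cv; exact: anc_trans cv hvx].
  + apply: onpathI; [by rewrite (anc_trans (anc_par _ _) hxu) | move=> c _ cv; exact: anc_trans cv hvpx].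
  + apply: onpathI; [by rewrite hxu | move=> c _ cp; exact: anc_trans cp (anc_par _ _)].
- have hcy : forall c, anc par c u -> anc par c v -> anc par c y.
    move=> c cu cv; case: (anc_total cu hyu) => // h; by rewrite (anc_trans h cv) in hyv.
  apply: three.
  + apply: onpathI; [by rewrite hyu | exact: hcy].
  + apply: onpathI; first by rewrite (anc_trans (anc_par _ _) hyu).
    move=> c cu cv; case: (anc_step (hcy c cu cv)) => // e.
    by subst c; rewrite cv in hyv.
  + apply: onpathI; [by rewrite hyu | move=> c _ cp; exact: anc_trans cp (anc_par _ _)].
- case/andP: hc => hx'r /eqP hpx.
  have hxx' : anc par x x' by rewrite -hpx; exact: anc_par.
  have hcx : forall c, anc par c u -> anc par c v -> anc par c x.
    move=> c cu cv; case: (anc_total cv hxv) => // h; by rewrite (anc_trans h cu) in hxu.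
  apply: three.
  + apply: onpathI; [by rewrite hxv orbT | exact: hcx].
  + apply: onpathI; [by rewrite hx'v orbT | move=> c cu cv; exact: anc_trans (hcx c cu cv) hxx'].
  + apply: onpathI; first by rewrite hxx' orbT.
    move=> c cu cx'; case: (anc_step cx') => [e|]; last by rewrite hpx.
    by subst c; rewrite (anc_trans hxx' cu) in hxu.
Qed.
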